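(* $\left\|\begin{bmatrix}1&1&1&1\\0&1&0&0\\0&0&1&0\\0&0&0&1\end{bmatrix}\right\|_\bullet>\left\|\begin{bmatrix}1&1&0\\1&1&1\\0&1&0\end{bmatrix}\right\|_\bullet$.
   Context: Fix $\mathbb F\in\{\mathbb R,\mathbb C\}$. For an $m\times n$ matrix $A$, the Schur norm is $\|A\|_\bullet=\sup\{\|A\bullet X\|: X\in M_{m,n}(\mathbb F),\ \|X\|\le1\}$, where $A\bullet X=[a_{ij}x_{ij}]$ is the entrywise product and $\|\cdot\|$ is the operator norm $\ell^2_n\to\ell^2_m$. *)

(* Defs.v *)
From HB Require Import structures.
From mathcomp Require Import all_boot all_order all_algebra.
From mathcomp Require Import classical_sets reals.
From mathcomp Require Import complex.

Set Implicit Arguments.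
Unset Strict Implicit.
Unset Printing Implicit Defensive.
Import Order.TTheory GRing.Theory Num.Theory.
Local Open Scope ring_scope.
Local Open Scope classical_set_scope.

(* Generic setting: a scalar field F (here R or R[i]) with an absolute value
   nm : F -> R valued in the reals R. *)
Section SchurNorm.
Context {R : realType} {F : pzRingType} (nm : F -> R).

Definition vnorm {n : nat} (x : 'cV[F]_n) : R :=
  Num.sqrt (\sum_(i < n) nm (x i 0) ^+ 2).

Definition opnorm {m n : nat} (A : 'M[F]_(m, n)) : R :=
  sup [set vnorm (A *m x) | x in [set x : 'cV[F]_n | vnorm x <= 1]].

Definition schur_prod {m n : nat} (A X : 'M[F]_(m, n)) : 'M[F]_(m, n) :=
  \matrix_(i, j) (A i j * X i j).

Definition schur_norm {m n : nat} (A : 'M[F]_(m, n)) : R :=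
  sup [set opnorm (schur_prod A X) | X in [set X : 'M[F]_(m, n) | opnorm X <= 1]].

End SchurNorm.

Definition mx_of_nats {F : pzRingType} (m n : nat) (rows : seq (seq nat))
  : 'M[F]_(m, n) :=
  \matrix_(i < m, j < n) ((nth 0%N (nth [::] rows i) j)%:R).

Definition A4 {F : pzRingType} : 'M[F]_4 :=
  mx_of_nats 4 4 [:: [:: 1; 1; 1; 1];
                     [:: 0; 1; 0; 0];
                     [:: 0; 0; 1; 0];
                     [:: 0; 0; 0; 1]]%N.

Definition B3 {F : pzRingType} : 'M[F]_3 :=
  mx_of_nats 3 3 [:: [:: 1; 1; 0];
                     [:: 1; 1; 1];
                     [:: 0; 1; 0]]%N.

Definition schur_norm_R {R : realType} {m n : nat} (A : 'M[R]_(m, n)) : R :=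
  schur_norm (@Num.norm _ R) A.

Definition schur_norm_C {R : realType} {m n : nat} (A : 'M[R[i]]_(m, n)) : R :=
  schur_norm (@ComplexField.Normc.normc R) A.

(* Main.v *)
Require Import Defs.
From mathcomp Require Import all_boot all_order all_algebra.
From mathcomp Require Import classical_sets reals.
From mathcomp Require Import complex.
From mathcomp Require Import ring lra.
Import Order.TTheory GRing.Theory Num.Theory.
Local Open Scope ring_scope.



Section CS.
Variable R : realType.
Lemma cs_ineq k (p q : 'I_k -> R) :
  (\sum_l p l * q l) ^+ 2 <= (\sum_l p l ^+ 2) * (\sum_l q l ^+ 2).
Proof.
set P := \sum_l p l ^+ 2; set Q := \sum_l q l ^+ 2; set S := \sum_l p l * q l.
have key t : 0 <= t ^+ 2 * P - 2 * t * S + Q.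
  have -> : t ^+ 2 * P - 2 * t * S + Q = \sum_l (t * p l - q l) ^+ 2.
    rewrite /P /Q /S mulr_sumr mulr_sumr -sumrN -!big_split /=.
    by apply: eq_bigr => l _; ring.
  by apply: sumr_ge0 => l _; apply: sqr_ge0.
have P0 : 0 <= P by apply: sumr_ge0 => l _; apply: sqr_ge0.
have [Pz|Pp] := eqVneq P 0.
  have pz l : p l = 0.
    apply/eqP; rewrite -sqrf_eq0; apply/eqP.
    move: Pz; rewrite /P => /eqP; rewrite psumr_eq0 => [/allP H|l' _]; last exact: sqr_ge0.
    by apply/eqP; apply: H; rewrite mem_index_enum.
  rewrite /S big1 ?Pz; first by rewrite expr0n /= mul0r.
  by move=> l _; rewrite pz mul0r.
have Pgt : 0 < P by rewrite lt_neqAle eq_sym Pp P0.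
have := key (S / P).
have -> : (S / P) ^+ 2 * P - 2 * (S / P) * S + Q = Q - S ^+ 2 / P.
  by field; rewrite Pp.
rewrite subr_ge0 ler_pdivrMr // => H.
by rewrite mulrC.
Qed.
End CS.



Section Gen.
Local Open Scope classical_set_scope.
Variable R : realType.
Variable F : fieldType.
Variable nm : F -> R.
Variable emb : {rmorphism R -> F}.
Hypothesis nm_ge0 : forall x, 0 <= nm x.
Hypothesis nmD : forall x y, nm (x + y) <= nm x + nm y.
Hypothesis nmM : forall x y, nm (x * y) = nm x * nm y.
Hypothesis nm_emb : forall r, nm (emb r) = `|r|.

Lemma nm0 : nm 0 = 0.
Proof. by rewrite -(rmorph0 emb) nm_emb normr0. Qed.

Lemma nm_sum (I : finType) (f : I -> F) : nm (\sum_i f i) <= \sum_i nm (f i).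
Proof.
elim/big_rec2: _ => [|i y x _ Hy]; first by rewrite nm0.
by apply: le_trans (nmD _ _) _; rewrite lerD2l.
Qed.

Definition s2 {n} (x : 'cV[F]_n) := \sum_(i < n) nm (x i 0) ^+ 2.

Lemma s2_ge0 n (x : 'cV[F]_n) : 0 <= s2 x.
Proof. by apply: sumr_ge0 => i _; apply: sqr_ge0. Qed.

Lemma vnormE n (x : 'cV[F]_n) : vnorm nm x = Num.sqrt (s2 x).
Proof. by []. Qed.

Lemma vnorm_ge0 n (x : 'cV[F]_n) : 0 <= vnorm nm x.
Proof. by rewrite vnormE sqrtr_ge0. Qed.

Lemma vnorm_sq n (x : 'cV[F]_n) : vnorm nm x ^+ 2 = s2 x.
Proof. by rewrite vnormE sqr_sqrtr // s2_ge0. Qed.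

Lemma vnorm_le n m (x : 'cV[F]_n) (y : 'cV[F]_m) :
  (vnorm nm x <= vnorm nm y) = (s2 x <= s2 y).
Proof. by rewrite !vnormE ler_sqrt // s2_ge0. Qed.

Lemma s2Z n a (x : 'cV[F]_n) : s2 (a *: x) = nm a ^+ 2 * s2 x.
Proof.
rewrite /s2 mulr_sumr; apply: eq_bigr => i _.
by rewrite mxE nmM exprMn.
Qed.

Lemma vnormZ n a (x : 'cV[F]_n) : vnorm nm (a *: x) = nm a * vnorm nm x.
Proof.
by rewrite !vnormE s2Z sqrtrM ?sqr_ge0 // sqrtr_sqr ger0_norm.
Qed.

Lemma nm_entry_le n (x : 'cV[F]_n) i : nm (x i 0) <= vnorm nm x.
Proof.
rewrite -(ler_sqr (x:=nm (x i 0)) (y:=vnorm nm x)) ?nnegrE ?nm_ge0 ?vnorm_ge0 // vnorm_sq /s2.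
rewrite (bigD1 i) //= lerDl; apply: sumr_ge0 => j _; exact: sqr_ge0.
Qed.

Lemma vnorm_mul_le m n (M : 'M[F]_(m, n)) (K : 'M[R]_(m, n)) x :
  (forall i j, nm (M i j) <= K i j) -> vnorm nm x <= 1 ->
  vnorm nm (M *m x) <= Num.sqrt (\sum_i (\sum_j K i j) ^+ 2).
Proof.
move=> HK Hx; rewrite vnormE ler_sqrt; last first.
  by apply: sumr_ge0 => i _; apply: sqr_ge0.
apply: ler_sum => i _; rewrite mxE.
have h1 : nm (\sum_j M i j * x j 0) <= \sum_j K i j.
  apply: le_trans (nm_sum _ _) _; apply: ler_sum => j _.
  rewrite nmM; apply: le_trans (HK i j).
  have := le_trans (nm_entry_le _ x j) Hx => h.
  by rewrite -[leRHS]mulr1 ler_wpM2l.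
rewrite ler_sqr ?nnegrE //; apply: le_trans h1; exact: nm_ge0.
Qed.

Lemma opnorm_set_ub m n (M : 'M[F]_(m, n)) :
  has_ubound [set vnorm nm (M *m x) | x in [set x : 'cV[F]_n | vnorm nm x <= 1]].
Proof.
exists (Num.sqrt (\sum_i (\sum_j (\matrix_(i, j) nm (M i j)) i j) ^+ 2)).
move=> _ [x Hx <-]; apply: vnorm_mul_le => // i j; by rewrite mxE.
Qed.

Lemma vnorm0 n : vnorm nm (0 : 'cV[F]_n) = 0.
Proof. rewrite vnormE /s2 big1 ?sqrtr0 // => i _; by rewrite mxE nm0 expr0n. Qed.

Lemma opnorm_ge m n (M : 'M[F]_(m, n)) x :
  vnorm nm x <= 1 -> vnorm nm (M *m x) <= opnorm nm M.
Proof.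
move=> Hx; rewrite /opnorm; apply: ub_le_sup; first by apply: opnorm_set_ub.
by exists x.
Qed.

Lemma opnorm_le m n (M : 'M[F]_(m, n)) c :
  (forall x, vnorm nm x <= 1 -> vnorm nm (M *m x) <= c) -> opnorm nm M <= c.
Proof.
move=> H; apply: ge_sup.
  by exists (vnorm nm (M *m 0)); exists 0 => //=; rewrite vnorm0 ler01.
by move=> _ [x Hx <-]; apply: H.
Qed.

Lemma opnorm_contr m n (M : 'M[F]_(m, n)) :
  opnorm nm M <= 1 -> forall z, vnorm nm (M *m z) <= vnorm nm z.
Proof.
move=> H z; apply/ler_addgt0Pr => e e0.
set t := vnorm nm z + e.
have t0 : 0 < t by rewrite /t ltr_pwDr // vnorm_ge0.
have Hz : vnorm nm (emb t^-1 *: z) <= 1.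
  rewrite vnormZ nm_emb ger0_norm ?invr_ge0 ?(ltW t0) // mulrC ler_pdivrMr // mul1r.
  by rewrite /t lerDl ltW.
have := le_trans (@opnorm_ge _ _ M _ Hz) H.
rewrite -scalemxAr vnormZ nm_emb ger0_norm ?invr_ge0 ?(ltW t0) //.
by rewrite mulrC ler_pdivrMr // mul1r.
Qed.

Lemma fact_bound m n k (A : 'M[F]_(m, n)) (U : 'M[R]_(m, k)) (V : 'M[R]_(n, k))
  a2 b2 : 0 <= a2 -> 0 <= b2 ->
  (forall i j, A i j = emb (\sum_l U i l * V j l)) ->
  (forall i, \sum_l U i l ^+ 2 <= a2) -> (forall j, \sum_l V j l ^+ 2 <= b2) ->
  forall X : 'M[F]_(m, n), (forall z, vnorm nm (X *m z) <= vnorm nm z) ->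
  forall x, s2 (schur_prod A X *m x) <= a2 * b2 * s2 x.
Proof.
move=> a0 b0 HA HU HV X HX x.
pose w l : 'cV[F]_n := \col_j (emb (V j l) * x j 0).
have E i : (schur_prod A X *m x) i 0 = \sum_l emb (U i l) * (X *m w l) i 0.
  rewrite mxE; under eq_bigr do rewrite mxE HA rmorph_sum mulr_suml mulr_suml.
  rewrite exchange_big; apply: eq_bigr => l _; rewrite mxE mulr_sumr.
  by apply: eq_bigr => j _; rewrite mxE rmorphM; ring.
have step1 : s2 (schur_prod A X *m x) <=
    \sum_i (\sum_l U i l ^+ 2) * (\sum_l nm ((X *m w l) i 0) ^+ 2).
  apply: ler_sum => i _; rewrite E.
  have cs := @cs_ineq R k (fun l => `|U i l|) (fun l => nm ((X *m w l) i 0)).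
  have -> : \sum_l U i l ^+ 2 = \sum_l `|U i l| ^+ 2.
    by apply: eq_bigr => l _; rewrite real_normK ?num_real.
  apply: le_trans cs.
  have h : nm (\sum_l emb (U i l) * (X *m w l) i 0) <=
      \sum_l `|U i l| * nm ((X *m w l) i 0).
    apply: le_trans (nm_sum _ _) _; apply: ler_sum => l _.
    by rewrite nmM nm_emb.
  rewrite ler_sqr ?nnegrE ?nm_ge0 //.
  by apply: sumr_ge0 => l _; rewrite mulr_ge0 ?normr_ge0 ?nm_ge0.
apply: le_trans step1 _.
have step2 : \sum_i (\sum_l U i l ^+ 2) * (\sum_l nm ((X *m w l) i 0) ^+ 2)
    <= a2 * \sum_l s2 (X *m w l).
  rewrite /s2 exchange_big /= mulr_sumr; apply: ler_sum => i _.
  apply: ler_wpM2r; [by apply: sumr_ge0 => l _; apply: sqr_ge0 | exact: HU].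
apply: le_trans step2 _.
have step3 : \sum_l s2 (X *m w l) <= \sum_l s2 (w l).
  by apply: ler_sum => l _; rewrite -vnorm_le; apply: HX.
apply: le_trans (ler_wpM2l a0 step3) _.
rewrite -mulrA ler_wpM2l //.
rewrite /s2 exchange_big /= mulr_sumr; apply: ler_sum => j _.
under eq_bigr do rewrite mxE nmM nm_emb exprMn real_normK ?num_real //.
rewrite -mulr_suml ler_wpM2r // ?sqr_ge0 //; exact: HV.
Qed.

Lemma opnorm0 m n : opnorm nm (0 : 'M[F]_(m, n)) <= 1.
Proof. by apply: opnorm_le => x _; rewrite mul0mx vnorm0 ler01. Qed.

Lemma schur_le m n (A : 'M[F]_(m, n)) c :
  (forall X, opnorm nm X <= 1 -> forall x, vnorm nm x <= 1 ->
     vnorm nm (schur_prod A X *m x) <= c) -> schur_norm nm A <= c.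
Proof.
move=> H; apply: ge_sup.
  by exists (opnorm nm (schur_prod A 0)); exists 0 => //; apply: opnorm0.
by move=> _ [X HX <-]; apply: opnorm_le => x Hx; apply: H.
Qed.

Lemma schur_fact_le m n k (A : 'M[F]_(m, n)) (U : 'M[R]_(m, k)) (V : 'M[R]_(n, k))
  a2 b2 : 0 <= a2 -> 0 <= b2 ->
  (forall i j, A i j = emb (\sum_l U i l * V j l)) ->
  (forall i, \sum_l U i l ^+ 2 <= a2) -> (forall j, \sum_l V j l ^+ 2 <= b2) ->
  schur_norm nm A <= Num.sqrt (a2 * b2).
Proof.
move=> a0 b0 HA HU HV; apply: schur_le => X HX x Hx.
have HX' : forall z, vnorm nm (X *m z) <= vnorm nm z.
  exact: opnorm_contr.
rewrite vnormE ler_sqrt ?mulr_ge0 //.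
apply: le_trans (@fact_bound _ _ _ A U V a2 b2 a0 b0 HA HU HV X HX' x) _.
rewrite -[leRHS]mulr1 ler_wpM2l ?mulr_ge0 //.
by rewrite -(vnorm_sq _ x) expr_le1 ?vnorm_ge0.
Qed.

Lemma nm1 : nm 1 = 1.
Proof. by rewrite -(rmorph1 emb) nm_emb normr1. Qed.

Lemma vnorm_delta n (j : 'I_n) : vnorm nm (delta_mx j 0 : 'cV[F]_n) <= 1.
Proof.
rewrite vnormE -sqrtr1 ler_sqrt // /s2 (bigD1 j) //= big1.
  by rewrite !mxE !eqxx /= nm1 expr1n addr0.
by move=> i /negbTE hi; rewrite !mxE hi /= nm0 expr0n.
Qed.

Lemma entry_le1 m n (X : 'M[F]_(m, n)) i j : opnorm nm X <= 1 -> nm (X i j) <= 1.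
Proof.
move=> H; have := le_trans (@opnorm_ge _ _ X _ (@vnorm_delta _ j)) H.
apply: le_trans; rewrite -colE.
by have := @nm_entry_le _ (col j X) i; rewrite mxE.
Qed.

Lemma schur_set_ub m n (A : 'M[F]_(m, n)) :
  has_ubound [set opnorm nm (schur_prod A X) | X in
                [set X : 'M[F]_(m, n) | opnorm nm X <= 1]].
Proof.
exists (Num.sqrt (\sum_i (\sum_j (\matrix_(i, j) nm (A i j)) i j) ^+ 2)).
move=> _ [X HX <-]; apply: opnorm_le => x Hx; apply: vnorm_mul_le => // i j.
rewrite !mxE nmM -[leRHS]mulr1 ler_wpM2l //; exact: entry_le1.
Qed.

Lemma schur_ge m n (A : 'M[F]_(m, n)) X x :
  opnorm nm X <= 1 -> vnorm nm x <= 1 ->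
  vnorm nm (schur_prod A X *m x) <= schur_norm nm A.
Proof.
move=> HX Hx; apply: le_trans (@opnorm_ge _ _ (schur_prod A X) _ Hx) _.
rewrite /schur_norm; apply: ub_le_sup; first by apply: schur_set_ub.
by exists X.
Qed.
End Gen.


Section Concrete.
Variable R : realType.

Definition ub (i j : nat) : R :=
  match i, j with
  | 0, 0 => 16/45 | 0, 1 => 1 | 0, _ => 16/45
  | 1, 0 => 11636/12825 | 1, 1 => 157/285 | 1, _ => -(4564/12825)
  | _, 0 => 19/24 | _, 1 => 0 | _, _ => 19/24 end.
Definition vb (i j : nat) : R := if j == 2%N then - ub i j else ub i j.
Definition Ub : 'M[R]_3 := \matrix_(i, j) ub i j.
Definition Vb : 'M[R]_3 := \matrix_(i, j) vb i j.

Lemma UV_ok (i j : 'I_3) : \sum_l Ub i l * Vb j l = (B3 : 'M[R]_3) i j.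
Proof.
rewrite !big_ord_recr big_ord0 !mxE /=.
case: i => [[|[|[|i]]] Hi] //; case: j => [[|[|[|j]]] Hj] //;
  rewrite /vb /=; by field.
Qed.

Lemma U_ok i : \sum_l Ub i l ^+ 2 <= 2507/2000.
Proof.
rewrite !big_ord_recr big_ord0 !mxE /=.
case: i => [[|[|[|i]]] Hi] //=; lra.
Qed.

Lemma V_ok i : \sum_l Vb i l ^+ 2 <= 2507/2000.
Proof.
rewrite !big_ord_recr big_ord0 !mxE /=.
case: i => [[|[|[|i]]] Hi] //; rewrite /vb /=; lra.
Qed.

Definition xo (i j : nat) : R :=
  match i, j with
  | 0, 0 => 73/127 | 0, _ => 60/127
  | _, 0 => -(60/127)
  | _, _ => if i == j then 109/127 else -(18/127) end.
Definition Xo : 'M[R]_4 := \matrix_(i, j) xo i j.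
Definition xz (i : nat) : R := if i == 0%N then 7/20 else 27/50.
Definition x0 : 'cV[R]_4 := \matrix_(i, j) xz i.

Lemma Xo_orth (a : 'I_4 -> R) :
  \sum_i (\sum_j Xo i j * a j) ^+ 2 = \sum_j a j ^+ 2.
Proof.
rewrite !big_ord_recr !big_ord0 !mxE /= /xo /=.
by field.
Qed.

Lemma x0_ok : \sum_i x0 i 0 ^+ 2 <= 1.
Proof. rewrite !big_ord_recr big_ord0 !mxE /= /xz /=; lra. Qed.

Lemma low_ok : (2507/2000 : R) * (2507/2000) <
  \sum_i ((schur_prod (A4 : 'M[R]_4) Xo *m x0) i 0) ^+ 2.
Proof.
rewrite !big_ord_recr big_ord0 !mxE.
rewrite !big_ord_recr !big_ord0 !mxE /= /xo /xz /=.
lra.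
Qed.
End Concrete.


Section Gen2.
Variable R : realType.
Variable F : fieldType.
Variable nm : F -> R.
Variable emb : {rmorphism R -> F}.
Hypothesis nm_ge0 : forall x, 0 <= nm x.
Hypothesis nmD : forall x y, nm (x + y) <= nm x + nm y.
Hypothesis nmM : forall x y, nm (x * y) = nm x * nm y.
Hypothesis nm_emb : forall r, nm (emb r) = `|r|.

Lemma vnorm_map n (y : 'cV[R]_n) :
  vnorm nm (map_mx emb y) = Num.sqrt (\sum_i y i 0 ^+ 2).
Proof.
rewrite /vnorm; congr Num.sqrt; apply: eq_bigr => i _.
by rewrite mxE nm_emb real_normK ?num_real.
Qed.

Lemma schur_map m n (A X : 'M[R]_(m, n)) :
  schur_prod (map_mx emb A) (map_mx emb X) = map_mx emb (schur_prod A X).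
Proof. by apply/matrixP => i j; rewrite !mxE rmorphM. Qed.

Lemma nats_map m n rows :
  (mx_of_nats m n rows : 'M[F]_(m, n)) = map_mx emb (mx_of_nats m n rows).
Proof. by apply/matrixP => i j; rewrite !mxE rmorph_nat. Qed.

Hypothesis contr : forall z : 'cV[F]_4,
  vnorm nm (map_mx emb (Xo R) *m z) <= vnorm nm z.

Lemma main_gen : schur_norm nm (B3 : 'M[F]_3) < schur_norm nm (A4 : 'M[F]_4).
Proof.
have a0 : (0 : R) <= 2507/2000 by lra.
have up : schur_norm nm (B3 : 'M[F]_3) <= Num.sqrt (2507/2000 * (2507/2000)).
  apply: (@schur_fact_le R F nm emb nm_ge0 nmD nmM nm_emb _ _ _ _ (Ub R) (Vb R)) => //.
  - by move=> i j; rewrite UV_ok /B3 nats_map mxE.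
  - exact: U_ok.
  - exact: V_ok.
apply: le_lt_trans up _.
have HX : opnorm nm (map_mx emb (Xo R)) <= 1.
  by apply: opnorm_le => // x Hx; apply: le_trans (contr x) Hx.
have Hx : vnorm nm (map_mx emb (x0 R)) <= 1.
  by rewrite vnorm_map -sqrtr1 ler_sqrt // x0_ok.
apply: (lt_le_trans _ (@schur_ge R F nm emb nm_ge0 nmD nmM nm_emb _ _ (A4 : 'M[F]_4) _ _ HX Hx)).
rewrite /A4 nats_map schur_map -map_mxM vnorm_map ltr_sqrt.
  exact: low_ok.
by apply: le_lt_trans _ (low_ok R); lra.
Qed.
End Gen2.


Section Inst.
Variable R : realType.
Local Notation cRe := (@complex.Re R).
Local Notation cIm := (@complex.Im R).

Lemma contr_R (z : 'cV[R]_4) :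
  vnorm (@Num.norm _ R) (map_mx (idfun : {rmorphism R -> R}) (Xo R) *m z) <=
  vnorm (@Num.norm _ R) z.
Proof.
rewrite /vnorm ler_sqrt; last by apply: sumr_ge0 => i _; apply: sqr_ge0.
under eq_bigr do rewrite real_normK ?num_real // mxE.
under [X in _ <= X]eq_bigr do rewrite real_normK ?num_real //.
under eq_bigr do under eq_bigr do rewrite mxE.
by rewrite (@Xo_orth R (fun j => z j 0)).
Qed.

Lemma real_main : schur_norm_R (@B3 R) < schur_norm_R (@A4 R).
Proof.
apply: (@main_gen R R (@Num.norm _ R) (idfun : {rmorphism R -> R})).
- by move=> x; apply: normr_ge0.
- by move=> x y; apply: ler_normD.
- by move=> x y; apply: normrM.
- by [].
- exact: contr_R.
Qed.

Lemma normc_ge0 (x : R[i]) : 0 <= ComplexField.Normc.normc x.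
Proof. by case: x => a b; rewrite /= sqrtr_ge0. Qed.

Lemma normc_sq (w : R[i]) :
  ComplexField.Normc.normc w ^+ 2 = cRe w ^+ 2 + cIm w ^+ 2.
Proof. by case: w => a b /=; rewrite sqr_sqrtr // addr_ge0 ?sqr_ge0. Qed.

Lemma normc_emb (r : R) : ComplexField.Normc.normc (real_complex R r) = `|r|.
Proof. by rewrite /= expr0n /= addr0 sqrtr_sqr. Qed.

Lemma cRe_sum (I : finType) (f : I -> R[i]) : cRe (\sum_i f i) = \sum_i cRe (f i).
Proof.
elim/big_rec2: _ => [//|i y x _ <-].
by case: (f i) => a b; case: x => c d.
Qed.

Lemma cIm_sum (I : finType) (f : I -> R[i]) : cIm (\sum_i f i) = \sum_i cIm (f i).
Proof.
elim/big_rec2: _ => [//|i y x _ <-].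
by case: (f i) => a b; case: x => c d.
Qed.

Lemma Re_embM (c : R) (w : R[i]) : cRe (real_complex R c * w) = c * cRe w.
Proof. by case: w => a b /=; ring. Qed.

Lemma Im_embM (c : R) (w : R[i]) : cIm (real_complex R c * w) = c * cIm w.
Proof. by case: w => a b /=; ring. Qed.

Lemma contr_C (z : 'cV[R[i]]_4) :
  vnorm (@ComplexField.Normc.normc R) (map_mx (real_complex R) (Xo R) *m z) <=
  vnorm (@ComplexField.Normc.normc R) z.
Proof.
rewrite /vnorm ler_sqrt; last by apply: sumr_ge0 => i _; apply: sqr_ge0.
under eq_bigr do rewrite normc_sq mxE cRe_sum cIm_sum.
under eq_bigr do under eq_bigr do rewrite mxE Re_embM.
under eq_bigr do under [X in _ + X ^+ 2]eq_bigr do rewrite mxE Im_embM.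
under [X in _ <= X]eq_bigr do rewrite normc_sq.
rewrite !big_split /=.
by rewrite (@Xo_orth R (fun j => cRe (z j 0))) (@Xo_orth R (fun j => cIm (z j 0))).
Qed.

Lemma complex_main : schur_norm_C (@B3 R[i]) < schur_norm_C (@A4 R[i]).
Proof.
apply: (@main_gen R R[i] (@ComplexField.Normc.normc R) (real_complex R)).
- exact: normc_ge0.
- exact: le_normcD.
- exact: ComplexField.Normc.normcM.
- exact: normc_emb.
- exact: contr_C.
Qed.
End Inst.

Theorem proposition5p4 (R : realType) :
  schur_norm_R (@B3 R) < schur_norm_R (@A4 R) /\
  schur_norm_C (@B3 R[i]) < schur_norm_C (@A4 R[i]).
Proof.
split; [exact: real_main | exact: complex_main].
Qed.
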